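(* Let $M$ be a compact complex manifold of complex dimension $n$. For all $p,q$ with $0\le p,q\le n$: (1) $b^{p,q}=\tilde b^{p,q}+a^{p,q}$, $d^{p,q}=\tilde d^{p,q}+a^{p,q}$, $c^{p,q}=\tilde c^{p,q}+f^{p,q}$, $e^{p,q}=\tilde e^{p,q}+f^{p,q}$; (2) $b^{p,q}\le h^{p,q}_{\partial\bar\partial}$, $d^{p,q}\le h^{p,q}_{\partial\bar\partial}$, $c^{p,q}\le h^{p,q}_{\partial+\bar\partial}$, $e^{p,q}\le h^{p,q}_{\partial+\bar\partial}$; (3) $h^{p,q}_{\partial+\bar\partial}+\tilde b^{p,q}=h^{p,q}_{\bar\partial}+c^{p,q}$, $h^{p,q}_{\partial+\bar\partial}+\tilde d^{p,q}=h^{p,q}_{\partial}+e^{p,q}$, $h^{p,q}_{\partial\bar\partial}+\tilde e^{p,q}=h^{p,q}_{\bar\partial}+d^{p,q}$, $h^{p,q}_{\partial\bar\partial}+\tilde c^{p,q}=h^{p,q}_{\partial}+b^{p,q}$; (4) $h^{p,q}_{\partial+\bar\partial}+h^{p,q}_{\partial\bar\partial}=h^{p,q}_{\partial}+h^{p,q}_{\bar\partial}+a^{p,q}+f^{p,q}$; (5) $h^{0,q}_{\bar\partial}\le h^{0,q}_{\partial+\bar\partial}$, $h^{0,q}_{\partial\bar\partial}\le h^{0,q}_{\partial}$, $h^{p,0}_{\partial\bar\partial}\le h^{p,0}_{\bar\partial}$, $h^{p,0}_{\partial}\le h^{p,0}_{\partial+\bar\partial}$; (6) $h^{p,n}_{\partial}\le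 h^{p,n}_{\partial\bar\partial}$, $h^{p,n}_{\partial+\bar\partial}\le h^{p,n}_{\bar\partial}$, $h^{n,q}_{\bar\partial}\le h^{n,q}_{\partial\bar\partial}$, $h^{n,q}_{\partial+\bar\partial}\le h^{n,q}_{\partial}$.
   Context: Let $M$ be a compact complex manifold of complex dimension $n$ and $\mathcal{E}^{p,q}(M)$ the space of smooth complex $(p,q)$-forms. In bidegree $(p,q)$, $\ker\partial,\ker\bar\partial,\ker\partial\bar\partial$ denote the kernels of $\partial,\bar\partial,\partial\bar\partial$ on $\mathcal{E}^{p,q}(M)$, and $\mathrm{Im}\,\partial=\partial\mathcal{E}^{p-1,q}(M)$, $\mathrm{Im}\,\bar\partial=\bar\partial\mathcal{E}^{p,q-1}(M)$, $\mathrm{Im}\,\partial\bar\partial=\partial\bar\partial\mathcal{E}^{p-1,q-1}(M)$ (zero if an index is negative). Define, all in bidegree $(p,q)$: $H^{p,q}_{\bar\partial}=\ker\bar\partial/\mathrm{Im}\,\bar\partial$, $H^{p,q}_{\partial}=\ker\partial/\mathrm{Im}\,\partial$, $H^{p,q}_{\partial\bar\partial}=(\ker\partial\cap\ker\bar\partial)/\mathrm{Im}\,\partial\bar\partial$ (Bott–Chern), $H^{p,q}_{\partial+\bar\partial}=\ker\partial\bar\partial/(\mathrm{Im}\,\partial+\mathrm{Im}\,\bar\partial)$ (Aeppli), and $A^{p,q}=(\mathrm{Im}\,\partial\cap\mathrm{Im}\,\bar\partial)/\mathrm{Im}\,\partial\bar\partial$, $B^{p,q}=(\mathrm{Im}\,\partial\cap\ker\bar\partial)/\mathrm{Im}\,\partial\bar\partial$,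 $C^{p,q}=\ker\partial\bar\partial/(\mathrm{Im}\,\partial+\ker\bar\partial)$, $D^{p,q}=(\ker\partial\cap\mathrm{Im}\,\bar\partial)/\mathrm{Im}\,\partial\bar\partial$, $E^{p,q}=\ker\partial\bar\partial/(\ker\partial+\mathrm{Im}\,\bar\partial)$, $F^{p,q}=\ker\partial\bar\partial/(\ker\partial+\ker\bar\partial)$, $\tilde B^{p,q}=(\mathrm{Im}\,\partial\cap\ker\bar\partial)/(\mathrm{Im}\,\partial\cap\mathrm{Im}\,\bar\partial)$, $\tilde D^{p,q}=(\ker\partial\cap\mathrm{Im}\,\bar\partial)/(\mathrm{Im}\,\partial\cap\mathrm{Im}\,\bar\partial)$, $\tilde C^{p,q}=(\ker\partial+\ker\bar\partial)/(\mathrm{Im}\,\partial+\ker\bar\partial)$, $\tilde E^{p,q}=(\ker\partial+\ker\bar\partial)/(\ker\partial+\mathrm{Im}\,\bar\partial)$. All are finite-dimensional; lowercase letters denote complex dimensions, e.g. $a^{p,q}=\dim A^{p,q}$, $\tilde b^{p,q}=\dim\tilde B^{p,q}$, $h^{p,q}_{\partial+\bar\partial}=\dim H^{p,q}_{\partial+\bar\partial}$. *)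

(* Defs.v *)
(* Abstract double complex model of (E^{*,*}(M), ∂, ∂̄) *)
From HB Require Import structures.
From mathcomp Require Import all_boot all_order all_algebra.
From Stdlib Require Import ClassicalEpsilon.
Set Implicit Arguments. Unset Strict Implicit. Unset Printing Implicit Defensive.
Import GRing.Theory.
Local Open Scope ring_scope.

Record dcomplex (R : fieldType) (n : nat) := DComplex {
  form : nat -> nat -> lmodType R;
  del : forall p q, {linear form p q -> form p.+1 q};
  dbar : forall p q, {linear form p q -> form p q.+1};
  del_del : forall p q (x : form p q), del p.+1 q (del p q x) = 0;
  dbar_dbar : forall p q (x : form p q), dbar p q.+1 (dbar p q x) = 0;
  del_dbar : forall p q (x : form p q),
      del p q.+1 (dbar p q x) = - dbar p.+1 q (del p q x);
  form_bounded : forall p q (x : form p q), (n < p)%N \/ (n < q)%N -> x = 0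
}.

Section Spaces.
Variables (R : fieldType) (n : nat) (C : dcomplex R n).

Definition kerD p q : form C p q -> Prop := fun x => del C p q x = 0.
Definition kerDb p q : form C p q -> Prop := fun x => dbar C p q x = 0.
Definition kerDDb p q : form C p q -> Prop :=
  fun x => del C p q.+1 (dbar C p q x) = 0.

(* images; zero when an index would be negative *)
Definition imD p q : form C p q -> Prop :=
  match p as p0 return form C p0 q -> Prop with
  | 0 => fun x => x = 0
  | p'.+1 => fun x => exists y : form C p' q, del C p' q y = x
  end.
Definition imDb p q : form C p q -> Prop :=
  match q as q0 return form C p q0 -> Prop with
  | 0 => fun x => x = 0
  | q'.+1 => fun x => exists y : form C p q', dbar C p q' y = x
  end.
Definition imDDb p q : form C p q -> Prop :=
  match p as p0 return form C p0 q -> Prop with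
  | 0 => fun x => x = 0
  | p'.+1 =>
    match q as q0 return form C p'.+1 q0 -> Prop with
    | 0 => fun x => x = 0
    | q'.+1 => fun x => exists y : form C p' q',
                 del C p' q'.+1 (dbar C p' q' y) = x
    end
  end.
End Spaces.
Arguments kerD {R n} C p q _.
Arguments kerDb {R n} C p q _.
Arguments kerDDb {R n} C p q _.
Arguments imD {R n} C p q _.
Arguments imDb {R n} C p q _.
Arguments imDDb {R n} C p q _.

Definition capP (V : Type) (P Q : V -> Prop) : V -> Prop := fun x => P x /\ Q x.
Definition addP (V : zmodType) (P Q : V -> Prop) : V -> Prop :=
  fun x => exists y z, P y /\ Q z /\ x = y + z.

(* dimq S T d : T ⊆ S and the quotient S/T has dimension d, i.e. there are
   d vectors of S whose classes form a basis of S/T. *)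
Definition dimq (R : fieldType) (V : lmodType R) (S T : V -> Prop) (d : nat) :=
  (forall x, T x -> S x) /\
  exists v : 'I_d -> V,
    (forall i, S (v i)) /\
    (forall c : 'I_d -> R, T (\sum_(i < d) c i *: v i) -> forall i, c i = 0) /\
    (forall x, S x -> exists c : 'I_d -> R, T (x - \sum_(i < d) c i *: v i)).

Definition findim (R : fieldType) (V : lmodType R) (S T : V -> Prop) :=
  exists d, dimq S T d.

(* the dimension of S/T (meaningful when it is finite-dimensional) *)
Definition qdim (R : fieldType) (V : lmodType R) (S T : V -> Prop) : nat :=
  epsilon (inhabits 0%N) (dimq S T).

Section Cohomologies.
Variables (R : fieldType) (n : nat) (C : dcomplex R n) (p q : nat).
Let kD := kerD C p q. Let kDb := kerDb C p q. Let kDDb := kerDDb C p q.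
Let iD := imD C p q. Let iDb := imDb C p q. Let iDDb := imDDb C p q.

(* numerator / denominator of each space *)
Definition sp_Hdb := (kDb, iDb).
Definition sp_Hd := (kD, iD).
Definition sp_HBC := (capP kD kDb, iDDb).
Definition sp_HA := (kDDb, addP iD iDb).
Definition sp_A := (capP iD iDb, iDDb).
Definition sp_B := (capP iD kDb, iDDb).
Definition sp_C := (kDDb, addP iD kDb).
Definition sp_D := (capP kD iDb, iDDb).
Definition sp_E := (kDDb, addP kD iDb).
Definition sp_F := (kDDb, addP kD kDb).
Definition sp_Bt := (capP iD kDb, capP iD iDb).
Definition sp_Dt := (capP kD iDb, capP iD iDb).
Definition sp_Ct := (addP kD kDb, addP iD kDb).
Definition sp_Et := (addP kD kDb, addP kD iDb).
End Cohomologies.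

Definition sdim (R : fieldType) (V : lmodType R) (s : (V -> Prop) * (V -> Prop)) :=
  qdim s.1 s.2.
Definition sfin (R : fieldType) (V : lmodType R) (s : (V -> Prop) * (V -> Prop)) :=
  findim s.1 s.2.

Definition h_dbar R n (C : dcomplex R n) p q := sdim (sp_Hdb C p q).
Definition h_del R n (C : dcomplex R n) p q := sdim (sp_Hd C p q).
Definition h_BC R n (C : dcomplex R n) p q := sdim (sp_HBC C p q).
Definition h_A R n (C : dcomplex R n) p q := sdim (sp_HA C p q).
Definition dim_a R n (C : dcomplex R n) p q := sdim (sp_A C p q).
Definition dim_b R n (C : dcomplex R n) p q := sdim (sp_B C p q).
Definition dim_c R n (C : dcomplex R n) p q := sdim (sp_C C p q).
Definition dim_d R n (C : dcomplex R n) p q := sdim (sp_D C p q).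
Definition dim_e R n (C : dcomplex R n) p q := sdim (sp_E C p q).
Definition dim_f R n (C : dcomplex R n) p q := sdim (sp_F C p q).
Definition dim_bt R n (C : dcomplex R n) p q := sdim (sp_Bt C p q).
Definition dim_dt R n (C : dcomplex R n) p q := sdim (sp_Dt C p q).
Definition dim_ct R n (C : dcomplex R n) p q := sdim (sp_Ct C p q).
Definition dim_et R n (C : dcomplex R n) p q := sdim (sp_Et C p q).

Definition all_finite R n (C : dcomplex R n) : Prop :=
  forall p q,
    sfin (sp_Hdb C p q) /\ sfin (sp_Hd C p q) /\ sfin (sp_HBC C p q) /\
    sfin (sp_HA C p q) /\ sfin (sp_A C p q) /\ sfin (sp_B C p q) /\
    sfin (sp_C C p q) /\ sfin (sp_D C p q) /\ sfin (sp_E C p q) /\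
    sfin (sp_F C p q) /\ sfin (sp_Bt C p q) /\ sfin (sp_Dt C p q) /\
    sfin (sp_Ct C p q) /\ sfin (sp_Et C p q).

(* Main.v *)
Require Import Defs.
From mathcomp Require Import all_boot all_order all_algebra.
From mathcomp Require Import zify.
From Stdlib Require Import Classical ClassicalEpsilon FunctionalExtensionality PropExtensionality.
Set Implicit Arguments. Unset Strict Implicit. Unset Printing Implicit Defensive.
Import GRing.Theory.
Local Open Scope ring_scope.

Section Gen.
Variables (R : fieldType) (V : lmodType R).
Implicit Types S T U : V -> Prop.

Definition subsp (P : V -> Prop) := P 0 /\ forall a x y, P x -> P y -> P (a *: x + y).
Definition comb d (c : 'I_d -> R) (v : 'I_d -> V) := \sum_(i < d) c i *: v i.
Definition indep T d (v : 'I_d -> V) := forall c, T (comb c v) -> forall i, c i = 0.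
Definition spans S T d (v : 'I_d -> V) := forall x, S x -> exists c, T (x - comb c v).

Lemma sub0 P : subsp P -> P 0. Proof. by case. Qed.
Lemma subD P x y : subsp P -> P x -> P y -> P (x + y).
Proof. by case=> _ H Hx Hy; have := H 1 x y Hx Hy; rewrite scale1r. Qed.
Lemma subZ P a x : subsp P -> P x -> P (a *: x).
Proof. by case=> H0 H Hx; have := H a x 0 Hx H0; rewrite addr0. Qed.
Lemma subN P x : subsp P -> P x -> P (- x).
Proof. by move=> HP Hx; rewrite -scaleN1r; apply: subZ. Qed.
Lemma subB P x y : subsp P -> P x -> P y -> P (x - y).
Proof. by move=> HP Hx Hy; apply: subD => //; apply: subN. Qed.
Lemma subsum P d (F : 'I_d -> V) : subsp P -> (forall i, P (F i)) -> P (\sum_(i < d) F i).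
Proof.
move=> HP HF; elim/big_rec: _ => [|i x _ Hx]; first exact: sub0.
exact: subD.
Qed.
Lemma subcomb P d (c : 'I_d -> R) v : subsp P -> (forall i, P (v i)) -> P (comb c v).
Proof. by move=> HP Hv; apply: subsum => // i; apply: subZ. Qed.

Lemma le_indep_span S T m d (w : 'I_m -> V) (v : 'I_d -> V) :
  subsp T -> indep T w -> (forall i, S (w i)) -> spans S T v -> (m <= d)%N.
Proof.
move=> HT Hw HS Hv.
pose f j := epsilon (inhabits (fun _ => 0)) (fun c => T (w j - comb c v)).
have Hf j : T (w j - comb (f j) v).
  by apply: (epsilon_spec (inhabits (fun _ => 0)) (fun c => T (w j - comb c v))); apply: Hv.
pose A : 'M[R]_(m, d) := \matrix_(j, i) f j i.
rewrite leqNgt; apply/negP => Hlt.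
have Hk : (0 < \rank (kermx A))%N.
  by rewrite mxrank_ker subn_gt0; apply: leq_ltn_trans (rank_leq_col A) Hlt.
suff Hz : kermx A = 0 by move: Hk; rewrite Hz mxrank0.
apply/row_matrixP => i0; rewrite row0.
set c := row i0 (kermx A).
have Hc : c *m A = 0 by rewrite /c -row_mul mulmx_ker row0.
have HT1 : T (comb (fun j => c 0 j) w).
  have E : comb (fun j => c 0 j) w =
    \sum_(j < m) c 0 j *: (w j - comb (f j) v) + \sum_(j < m) c 0 j *: comb (f j) v.
    by rewrite -big_split /=; apply: eq_bigr => k _; rewrite -scalerDr subrK.
  have E2 : \sum_(j < m) c 0 j *: comb (f j) v = 0.
    rewrite /comb.
    under eq_bigr => k _ do rewrite scaler_sumr.
    rewrite exchange_big /=; apply: big1 => i _.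
    under eq_bigr => k _ do rewrite scalerA.
    rewrite -scaler_suml.
    have : (c *m A) 0 i = 0 by rewrite Hc mxE.
    rewrite mxE => H0.
    suff -> : \sum_(j < m) c 0 j * f j i = 0 by rewrite scale0r.
    apply: etrans H0; apply: eq_bigr => k _; by rewrite [A k i]mxE.
  rewrite E E2 addr0; apply: subsum => // k; exact: subZ.
apply/rowP => j; rewrite [RHS]mxE; exact: (Hw _ HT1 j).
Qed.

Lemma dimq_uniq S T d d' : subsp T -> dimq S T d -> dimq S T d' -> d = d'.
Proof.
move=> HT [_ [v [Sv [Iv Pv]]]] [_ [w [Sw [Iw Pw]]]].
apply/eqP; rewrite eqn_leq.
by rewrite (le_indep_span HT Iv Sv Pw) (le_indep_span HT Iw Sw Pv).
Qed.

Lemma qdim_eq S T d : subsp T -> dimq S T d -> qdim S T = d.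
Proof.
move=> HT H; apply: (dimq_uniq HT _ H).
by apply: (epsilon_spec (inhabits 0%N) (dimq S T)); exists d.
Qed.

Lemma bounded_max (P : nat -> Prop) N : P 0%N -> (forall k, P k -> (k <= N)%N) ->
  exists k, P k /\ ~ P k.+1.
Proof.
move=> P0 HB; apply: NNPP => Hn.
have Hall k : P k -> P k.+1.
  move=> Pk; apply: NNPP => Hk; apply: Hn; by exists k.
have : P N.+1 by elim: N.+1 => // k IH; exact: Hall.
by move/HB; rewrite ltnn.
Qed.

Lemma lfin S T N (v : 'I_N -> V) : subsp T -> subsp S -> (forall x, T x -> S x) ->
  spans S T v -> findim S T.
Proof.
move=> HT HS TS Hv.
pose P k := exists w : 'I_k -> V, (forall i, S (w i)) /\ indep T w.
have P0 : P 0%N by exists (fun _ => 0); split=> [[] //|c _ [] //].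
have PB k : P k -> (k <= N)%N.
  by case=> w [Sw Iw]; apply: (le_indep_span HT Iw Sw Hv).
have [k [[w [Sw Iw]] Nk]] := bounded_max P0 PB.
exists k; split => //; exists w; split => //; split => //.
move=> x Sx; apply: NNPP => Hx; apply: Nk.
pose w' (i : 'I_k.+1) := if insub (val i) is Some j then w j else x.
have Ew j : w' (widen_ord (leqnSn k) j) = w j by rewrite /w' /= valK.
have Em : w' ord_max = x by rewrite /w' insubN //= ltnn.
exists w'; split.
  by move=> i; rewrite /w'; case: insub => [j|] //.
move=> c Hc.
have E : comb c w' = comb (fun j => c (widen_ord (leqnSn k) j)) w + c ord_max *: x.
  by rewrite /comb big_ord_recr /= Em; congr (_ + _); apply: eq_bigr => j _; rewrite Ew.
have cm : c ord_max = 0.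
  apply: NNPP => Hcm; apply: Hx.
  exists (fun j => - (c ord_max)^-1 * c (widen_ord (leqnSn k) j)).
  have -> : x - comb (fun j => - (c ord_max)^-1 * c (widen_ord (leqnSn k) j)) w =
            (c ord_max)^-1 *: comb c w'.
    rewrite E scalerDr scalerA mulVf; last by apply/eqP.
    rewrite scale1r addrC; congr (_ + _).
    rewrite /comb scaler_sumr -sumrN; apply: eq_bigr => j _.
    by rewrite scalerA mulNr scaleNr opprK.
  exact: subZ.
have cw : forall j, c (widen_ord (leqnSn k) j) = 0.
  by apply: Iw; move: Hc; rewrite E cm scale0r addr0.
move=> i; case: (ltnP i k) => Hi.
  by have := cw (Ordinal Hi); rewrite (_ : widen_ord _ _ = i) //; apply: val_inj.
have -> : i = ord_max by apply: val_inj => /=; apply/eqP; rewrite eqn_leq Hi -ltnS ltn_ord.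
exact: cm.
Qed.

Lemma splitL m k (j : 'I_m) : split (lshift k j) = inl j.
Proof. exact: (unsplitK (inl j : 'I_m + 'I_k)). Qed.
Lemma splitR m k (j : 'I_k) : split (rshift m j) = inr j.
Proof. exact: (unsplitK (inr j : 'I_m + 'I_k)). Qed.

Lemma qdim_add U S T : subsp T -> subsp S -> subsp U ->
  (forall x, T x -> S x) -> (forall x, S x -> U x) -> findim U T ->
  qdim U T = (qdim U S + qdim S T)%N.
Proof.
move=> HT HS HU TS SU [N [_ [u [Uu [Iu Pu]]]]].
have [m Dm] : findim U S.
  apply: (@lfin U S N u) => // x Ux; have [c Hc] := Pu x Ux; exists c; exact: TS.
have [k Dk] : findim S T.
  apply: (@lfin S T N u) => // x Sx; exact: Pu (SU _ Sx).
rewrite (qdim_eq HS Dm) (qdim_eq HT Dk).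
apply: qdim_eq => //.
case: Dm => _ [a [Ua [Ia Pa]]]; case: Dk => _ [b [Sb [Ib Pb]]].
pose fam (i : 'I_(m + k)) := match split i with inl j => a j | inr j => b j end.
have Ecomb c : comb c fam = comb (fun j => c (lshift k j)) a + comb (fun j => c (rshift m j)) b.
  rewrite /comb big_split_ord /=; congr (_ + _); apply: eq_bigr => j _;
  by rewrite /fam ?splitL ?splitR.
split=> [x Tx|]; first exact: SU (TS _ Tx).
exists fam; split.
  by move=> i; rewrite /fam; case: split => j //; apply: SU.
split.
  move=> c; rewrite -/(comb c fam) Ecomb => Hc.
  have Ha : forall j, c (lshift k j) = 0.
    apply: Ia; move: (TS _ Hc) => H.
    rewrite -[X in S X](addrK (comb (fun j => c (rshift m j)) b)).
    apply: subB => //; apply: subcomb => //.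
  have Hb : forall j, c (rshift m j) = 0.
    apply: Ib; move: Hc.
    rewrite (_ : comb (fun j => c (lshift k j)) a = 0) ?add0r //.
    by rewrite /comb big1 // => j _; rewrite Ha scale0r.
  move=> i; case: (split_ordP i) => j ->; [exact: Ha | exact: Hb].
move=> x Ux.
have [ca Hca] := Pa x Ux; have [cb Hcb] := Pb _ Hca.
exists (fun i => match split i with inl j => ca j | inr j => cb j end).
change (T (x - comb (fun i => match split i with inl j => ca j | inr j => cb j end) fam)); rewrite Ecomb.
have E1 : comb (fun j => match split (lshift k j) with inl j0 => ca j0 | inr j0 => cb j0 end) a = comb ca a.
  by apply: eq_bigr => j _; rewrite splitL.
have E2 : comb (fun j => match split (rshift m j) with inl j0 => ca j0 | inr j0 => cb j0 end) b = comb cb b.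
  by apply: eq_bigr => j _; rewrite splitR.
by rewrite E1 E2 opprD addrA.
Qed.

Lemma dimq_incl S T S' T' d : subsp S -> subsp T -> subsp T' ->
  (forall x, S x -> S' x) -> (forall x, T' x -> S' x) ->
  (forall x, S x -> (T x <-> T' x)) ->
  (forall x, S' x -> exists y z, S y /\ T' z /\ x = y + z) ->
  dimq S T d -> dimq S' T' d.
Proof.
move=> HS HT HT' SS' TS' STT SP [TS [v [Sv [Iv Pv]]]].
split => //; exists v; split; first by move=> i; exact: SS'.
split.
  move=> c Hc; apply: Iv; apply/(STT _ (subcomb c HS Sv)); exact: Hc.
move=> x /SP [y [z [Sy [Tz ->]]]].
have [c Hc] := Pv y Sy; exists c.
rewrite addrAC; apply: subD => //; apply: (STT _ (subB HS Sy (subcomb c HS Sv))).1; exact: Hc.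
Qed.

Lemma qdim_incl S T S' T' : subsp S -> subsp T -> subsp T' ->
  (forall x, S x -> S' x) -> (forall x, T' x -> S' x) ->
  (forall x, S x -> (T x <-> T' x)) ->
  (forall x, S' x -> exists y z, S y /\ T' z /\ x = y + z) ->
  findim S T -> qdim S' T' = qdim S T.
Proof.
move=> HS HT HT' SS' TS' STT SP [d Hd].
rewrite (qdim_eq HT Hd); apply: qdim_eq => //; exact: dimq_incl Hd.
Qed.

Lemma qdim_zero S T : subsp T -> (forall x, T x -> S x) -> (forall x, S x -> T x) -> qdim S T = 0%N.
Proof.
move=> HT TS ST; apply: qdim_eq => //; split => //.
exists (fun _ => 0); split; first by case.
split; first by move=> c _ [].
move=> x Sx; exists (fun _ => 0); rewrite /comb big_ord0 subr0; exact: ST.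
Qed.

Lemma predext (P Q : V -> Prop) : (forall x, P x <-> Q x) -> P = Q.
Proof. move=> H; apply: functional_extensionality => x; exact: propositional_extensionality. Qed.

Lemma capC (P Q : V -> Prop) : capP P Q = capP Q P.
Proof. by apply: predext => x; rewrite /capP; tauto. Qed.
Lemma addC (P Q : V -> Prop) : addP P Q = addP Q P.
Proof.
apply: predext => x; rewrite /addP; split => -[y [z [Py [Qz ->]]]];
  by exists z, y; rewrite addrC.
Qed.
Lemma capS (P Q : V -> Prop) : subsp P -> subsp Q -> subsp (capP P Q).
Proof.
move=> [P0 HP] [Q0 HQ]; split; first by split.
by move=> a x y [? ?] [? ?]; split; [apply: HP|apply: HQ].
Qed.
Lemma addS (P Q : V -> Prop) : subsp P -> subsp Q -> subsp (addP P Q).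
Proof.
move=> HP HQ; split; first by exists 0, 0; rewrite addr0; split; [exact: sub0|split => //; exact: sub0].
move=> a x y [x1 [x2 [P1 [Q2 ->]]]] [y1 [y2 [P1' [Q2' ->]]]].
exists (a *: x1 + y1), (a *: x2 + y2); split; first by case: HP => _; apply.
split; first by case: HQ => _; apply.
by rewrite scalerDr addrACA.
Qed.

Lemma addL (P Q : V -> Prop) x : subsp Q -> P x -> addP P Q x.
Proof. by move=> HQ Hx; exists x, 0; rewrite addr0; split => //; split => //; exact: sub0. Qed.
Lemma addR (P Q : V -> Prop) x : subsp P -> Q x -> addP P Q x.
Proof. by move=> HP Hx; exists 0, x; rewrite add0r; split; [exact: sub0|]. Qed.

Lemma G3a Z K1 I1 I2 : subsp Z -> subsp K1 -> subsp I1 -> subsp I2 ->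
  (forall x, I1 x -> K1 x) -> (forall x, K1 x -> Z x) -> (forall x, I2 x -> Z x) ->
  findim Z (addP I2 I1) -> findim K1 I1 -> findim (capP I2 K1) (capP I2 I1) ->
  (qdim Z (addP I2 I1) + qdim (capP I2 K1) (capP I2 I1) =
   qdim K1 I1 + qdim Z (addP I2 K1))%N.
Proof.
move=> HZ HK1 HI1 HI2 I1K1 K1Z I2Z FA FH FB.
have HIK := capS HI2 HK1.
have HM := addS HI1 HIK.
have E1 : qdim Z (addP I2 I1) = (qdim Z (addP I2 K1) + qdim (addP I2 K1) (addP I2 I1))%N.
  apply: qdim_add => //; [exact: addS|exact: addS| |].
  - by move=> x [y [z [Hy [Hz ->]]]]; exists y, z; auto.
  - by move=> x [y [z [Hy [Hz ->]]]]; apply: subD => //; auto.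
have E2 : qdim K1 I1 = (qdim K1 (addP I1 (capP I2 K1)) + qdim (addP I1 (capP I2 K1)) I1)%N.
  apply: qdim_add => //.
  - by move=> x Hx; apply: addL.
  - by move=> x [y [z [Hy [[_ Hz] ->]]]]; apply: subD => //; auto.
have E3 : qdim (addP I1 (capP I2 K1)) I1 = qdim (capP I2 K1) (capP I2 I1).
  apply: qdim_incl => //; [exact: capS| | | |].
  - by move=> x Hx; apply: addR.
  - by move=> x Hx; apply: addL.
  - by move=> x [Hx _]; split => [[]|] //.
  - by move=> x [y [z [Hy [Hz ->]]]]; exists z, y; rewrite addrC.
have E4 : qdim (addP I2 K1) (addP I2 I1) = qdim K1 (addP I1 (capP I2 K1)).
  apply: qdim_incl => //; [exact: addS| | | | |].
  - by move=> x Hx; apply: addR.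
  - by move=> x [y [z [Hy [Hz ->]]]]; exists y, z; auto.
  - move=> x Kx; split.
      by move=> [y [z [Hy [[Hz _] ->]]]]; exists z, y; rewrite addrC.
    move=> [y [z [Hy [Hz E]]]]; exists z, y; split => //; split; last by rewrite addrC.
    split => //; have -> : y = x - z by rewrite E addrK.
    by apply: subB => //; auto.
  - move=> x [y [z [Hy [Hz ->]]]]; exists z, y; rewrite addrC; split => //; split => //.
    by apply: addL.
  - case: FH => N [_ [u [_ [_ Pu]]]]; apply: (@lfin _ _ N u) => //.
      by move=> x [y [z [Hy [[_ Hz] ->]]]]; apply: subD => //; auto.
    move=> x /Pu [c Hc]; exists c; exact: addL.
lia.
Qed.

Lemma G3b K1 I1 K2 I0 : subsp K1 -> subsp I1 -> subsp K2 -> subsp I0 ->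
  (forall x, I1 x -> K1 x) -> (forall x, I0 x -> K2 x /\ I1 x) ->
  findim (capP K2 K1) I0 -> findim K1 I1 ->
  (qdim (capP K2 K1) I0 + qdim (addP K2 K1) (addP K2 I1) =
   qdim K1 I1 + qdim (capP K2 I1) I0)%N.
Proof.
move=> HK1 HI1 HK2 HI0 I1K1 I0KI FBC FH.
have HKK := capS HK2 HK1.
have HKI := capS HK2 HI1.
have HM := addS HI1 HKK.
have E1 : qdim (capP K2 K1) I0 = (qdim (capP K2 K1) (capP K2 I1) + qdim (capP K2 I1) I0)%N.
  apply: qdim_add => //.
  - by move=> x [Hx Hy]; split; auto.
have E2 : qdim K1 I1 = (qdim K1 (addP I1 (capP K2 K1)) + qdim (addP I1 (capP K2 K1)) I1)%N.
  apply: qdim_add => //.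
  - by move=> x Hx; apply: addL.
  - by move=> x [y [z [Hy [[_ Hz] ->]]]]; apply: subD => //; auto.
have E3 : qdim (addP I1 (capP K2 K1)) I1 = qdim (capP K2 K1) (capP K2 I1).
  apply: qdim_incl => //.
  - by move=> x Hx; apply: addR.
  - by move=> x Hx; apply: addL.
  - by move=> x [Hx _]; split => [[]|] //.
  - by move=> x [y [z [Hy [Hz ->]]]]; exists z, y; rewrite addrC.
  - case: FBC => N [_ [u [_ [_ Pu]]]]; apply: (@lfin _ _ N u) => //.
      by move=> x [Hx Hy]; split; auto.
    by move=> x Hx; have [c Hc] := Pu x Hx; exists c; apply: I0KI.
have E4 : qdim (addP K2 K1) (addP K2 I1) = qdim K1 (addP I1 (capP K2 K1)).
  apply: qdim_incl => //; [exact: addS| | | | |].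
  - by move=> x Hx; apply: addR.
  - by move=> x [y [z [Hy [Hz ->]]]]; exists y, z; auto.
  - move=> x Kx; split.
      by move=> [y [z [Hy [[Hz _] ->]]]]; exists z, y; rewrite addrC.
    move=> [y [z [Hy [Hz E]]]]; exists z, y; split => //; split; last by rewrite addrC.
    split => //; have -> : y = x - z by rewrite E addrK.
    by apply: subB => //; auto.
  - move=> x [y [z [Hy [Hz ->]]]]; exists z, y; rewrite addrC; split => //; split => //.
    by apply: addL.
  - case: FH => N [_ [u [_ [_ Pu]]]]; apply: (@lfin _ _ N u) => //.
      by move=> x [y [z [Hy [[_ Hz] ->]]]]; apply: subD => //; auto.
    move=> x /Pu [c Hc]; exists c; exact: addL.
lia.
Qed.

End Gen.
Section Cx.
Variables (R : fieldType) (n : nat) (C : dcomplex R n).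

Lemma kD_S p q : subsp (kerD C p q).
Proof. split; first exact: linear0. by move=> a x y Hx Hy; rewrite /kerD linearP Hx Hy scaler0 addr0. Qed.
Lemma kDb_S p q : subsp (kerDb C p q).
Proof. split; first exact: linear0. by move=> a x y Hx Hy; rewrite /kerDb linearP Hx Hy scaler0 addr0. Qed.
Lemma kDDb_S p q : subsp (kerDDb C p q).
Proof.
split; first by rewrite /kerDDb !linear0.
by move=> a x y Hx Hy; rewrite /kerDDb !linearP Hx Hy scaler0 addr0.
Qed.
Lemma iD_S p q : subsp (imD C p q).
Proof.
case: p => [|p] /=; first by split => // a x y -> ->; rewrite scaler0 addr0.
split; first by exists 0; rewrite linear0.
by move=> a x y [x' <-] [y' <-]; exists (a *: x' + y'); rewrite linearP.
Qed.
Lemma iDb_S p q : subsp (imDb C p q).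
Proof.
case: q => [|q] /=; first by split => // a x y -> ->; rewrite scaler0 addr0.
split; first by exists 0; rewrite linear0.
by move=> a x y [x' <-] [y' <-]; exists (a *: x' + y'); rewrite linearP.
Qed.
Lemma iDDb_S p q : subsp (imDDb C p q).
Proof.
case: p => [|p] /=; first by split => // a x y -> ->; rewrite scaler0 addr0.
case: q => [|q] /=; first by split => // a x y -> ->; rewrite scaler0 addr0.
split; first by exists 0; rewrite !linear0.
by move=> a x y [x' <-] [y' <-]; exists (a *: x' + y'); rewrite !linearP.
Qed.

Lemma iDDb_iD p q x : imDDb C p q x -> imD C p q x.
Proof. case: p x => [|p] x //=; case: q x => [|q] x /=; [by move->; exists 0; rewrite linear0|]. by case=> y <-; eexists. Qed.
Lemma iDDb_iDb p q x : imDDb C p q x -> imDb C p q x.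
Proof.
case: p x => [|p] x /=; first by case: q x => [|q] x //= ->; exists 0; rewrite linear0.
case: q x => [|q] x //= [y <-]; exists (- del C p q y); by rewrite del_dbar linearN.
Qed.
Lemma iD_kD p q x : imD C p q x -> kerD C p q x.
Proof. case: p x => [|p] x /=; [by move->; rewrite /kerD linear0 | by case=> y <-; rewrite /kerD del_del]. Qed.
Lemma iDb_kDb p q x : imDb C p q x -> kerDb C p q x.
Proof. case: q x => [|q] x /=; [by move->; rewrite /kerDb linear0 | by case=> y <-; rewrite /kerDb dbar_dbar]. Qed.
Lemma kD_kDDb p q x : kerD C p q x -> kerDDb C p q x.
Proof. by rewrite /kerD /kerDDb del_dbar => ->; rewrite linear0 oppr0. Qed.
Lemma kDb_kDDb p q x : kerDb C p q x -> kerDDb C p q x.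
Proof. by rewrite /kerDb /kerDDb => ->; rewrite linear0. Qed.

Hypothesis Hfin : all_finite C.

Ltac unf := rewrite /h_A /h_BC /h_dbar /h_del /dim_a /dim_b /dim_c /dim_d /dim_e /dim_f
  /dim_bt /dim_ct /dim_dt /dim_et /sdim /=.

Lemma l3a p q : (h_A C p q + dim_bt C p q = h_dbar C p q + dim_c C p q)%N.
Proof.
have [F1 [F2 [F3 [F4 [F5 [F6 [F7 [F8 [F9 [F10 [F11 [F12 [F13 F14]]]]]]]]]]]]] := Hfin p q.
unf; apply: G3a; [exact: kDDb_S|exact: kDb_S|exact: iDb_S|exact: iD_S|exact: iDb_kDb|exact: kDb_kDDb|
  by move=> x /iD_kD /kD_kDDb|exact: F4|exact: F1|exact: F11].
Qed.
Lemma l3b p q : (h_A C p q + dim_dt C p q = h_del C p q + dim_e C p q)%N.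
Proof.
have [F1 [F2 [F3 [F4 [F5 [F6 [F7 [F8 [F9 [F10 [F11 [F12 [F13 F14]]]]]]]]]]]]] := Hfin p q.
unf.
rewrite (addC (imD C p q)) (capC (kerD C p q)) (capC (imD C p q)) (addC (kerD C p q)).
apply: G3a; [exact: kDDb_S|exact: kD_S|exact: iD_S|exact: iDb_S|exact: iD_kD|exact: kD_kDDb|
  by move=> x /iDb_kDb /kDb_kDDb| | exact: F2 | ].
- by rewrite -addC; exact: F4.
- by rewrite -capC -(capC (imD C p q)); exact: F12.
Qed.

Lemma l3c p q : (h_BC C p q + dim_et C p q = h_dbar C p q + dim_d C p q)%N.
Proof.
have [F1 [F2 [F3 [F4 [F5 [F6 [F7 [F8 [F9 [F10 [F11 [F12 [F13 F14]]]]]]]]]]]]] := Hfin p q.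
unf; apply: G3b; [exact: kDb_S|exact: iDb_S|exact: kD_S|exact: iDDb_S|exact: iDb_kDb| |exact: F3|exact: F1].
by move=> x Hx; split; [apply: iD_kD; apply: iDDb_iD|apply: iDDb_iDb].
Qed.

Lemma l3d p q : (h_BC C p q + dim_ct C p q = h_del C p q + dim_b C p q)%N.
Proof.
have [F1 [F2 [F3 [F4 [F5 [F6 [F7 [F8 [F9 [F10 [F11 [F12 [F13 F14]]]]]]]]]]]]] := Hfin p q.
unf.
rewrite (capC (kerD C p q)) (addC (kerD C p q)) (addC (imD C p q)) (capC (imD C p q)).
apply: G3b; [exact: kD_S|exact: iD_S|exact: kDb_S|exact: iDDb_S|exact: iD_kD| | |exact: F2].
- by move=> x Hx; split; [apply: iDb_kDb; apply: iDDb_iDb|apply: iDDb_iD].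
- by rewrite -capC; exact: F3.
Qed.
Lemma iDDb_capb p q x : imDDb C p q x -> capP (imD C p q) (imDb C p q) x.
Proof. by move=> H; split; [apply: iDDb_iD|apply: iDDb_iDb]. Qed.

Lemma l1 p q : [/\ dim_b C p q = (dim_bt C p q + dim_a C p q)%N,
      dim_d C p q = (dim_dt C p q + dim_a C p q)%N,
      dim_c C p q = (dim_ct C p q + dim_f C p q)%N &
      dim_e C p q = (dim_et C p q + dim_f C p q)%N].
Proof.
have [F1 [F2 [F3 [F4 [F5 [F6 [F7 [F8 [F9 [F10 [F11 [F12 [F13 F14]]]]]]]]]]]]] := Hfin p q.
unf; split.
- apply: qdim_add; [exact: iDDb_S|apply: capS; [exact: iD_S|exact: iDb_S]|apply: capS; [exact: iD_S|exact: kDb_S]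
   |exact: iDDb_capb|by move=> x [H1 H2]; split => //; exact: iDb_kDb|exact: F6].
- apply: qdim_add; [exact: iDDb_S|apply: capS; [exact: iD_S|exact: iDb_S]|apply: capS; [exact: kD_S|exact: iDb_S]
   |exact: iDDb_capb|by move=> x [H1 H2]; split => //; exact: iD_kD|exact: F8].
- rewrite addnC; apply: qdim_add; [apply: addS; [exact: iD_S|exact: kDb_S]|apply: addS; [exact: kD_S|exact: kDb_S]|exact: kDDb_S
   |by move=> x [y [z [Hy [Hz ->]]]]; exists y, z; split; [exact: iD_kD|]
   |by move=> x [y [z [Hy [Hz ->]]]]; apply: subD; [exact: kDDb_S|exact: kD_kDDb|exact: kDb_kDDb]|exact: F7].
- rewrite addnC; apply: qdim_add; [apply: addS; [exact: kD_S|exact: iDb_S]|apply: addS; [exact: kD_S|exact: kDb_S]|exact: kDDb_S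
   |by move=> x [y [z [Hy [Hz ->]]]]; exists y, z; split; [|split; [exact: iDb_kDb|]]
   |by move=> x [y [z [Hy [Hz ->]]]]; apply: subD; [exact: kDDb_S|exact: kD_kDDb|exact: kDb_kDDb]|exact: F9].
Qed.

Lemma l2 p q : [/\ (dim_b C p q <= h_BC C p q)%N, (dim_d C p q <= h_BC C p q)%N,
      (dim_c C p q <= h_A C p q)%N & (dim_e C p q <= h_A C p q)%N].
Proof.
have [F1 [F2 [F3 [F4 [F5 [F6 [F7 [F8 [F9 [F10 [F11 [F12 [F13 F14]]]]]]]]]]]]] := Hfin p q.
unf; split.
- rewrite (@qdim_add _ _ (capP (kerD C p q) (kerDb C p q)) (capP (imD C p q) (kerDb C p q)) (imDDb C p q)) ?leq_addl;
  [done|exact: iDDb_S|apply: capS; [exact: iD_S|exact: kDb_S]|apply: capS; [exact: kD_S|exact: kDb_S]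
   |by move=> x /iDDb_capb [H1 H2]; split => //; exact: iDb_kDb|by move=> x [H1 H2]; split => //; exact: iD_kD|exact: F3].
- rewrite (@qdim_add _ _ (capP (kerD C p q) (kerDb C p q)) (capP (kerD C p q) (imDb C p q)) (imDDb C p q)) ?leq_addl;
  [done|exact: iDDb_S|apply: capS; [exact: kD_S|exact: iDb_S]|apply: capS; [exact: kD_S|exact: kDb_S]
   |by move=> x /iDDb_capb [H1 H2]; split => //; exact: iD_kD|by move=> x [H1 H2]; split => //; exact: iDb_kDb|exact: F3].
- rewrite (@qdim_add _ _ (kerDDb C p q) (addP (imD C p q) (kerDb C p q)) (addP (imD C p q) (imDb C p q))) ?leq_addr;
  [done|apply: addS; [exact: iD_S|exact: iDb_S]|apply: addS; [exact: iD_S|exact: kDb_S]|exact: kDDb_S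
   |by move=> x [y [z [Hy [Hz ->]]]]; exists y, z; split; [|split; [exact: iDb_kDb|]]
   |by move=> x [y [z [Hy [Hz ->]]]]; apply: subD; [exact: kDDb_S|apply: kD_kDDb; exact: iD_kD|exact: kDb_kDDb]|exact: F4].
- rewrite (@qdim_add _ _ (kerDDb C p q) (addP (kerD C p q) (imDb C p q)) (addP (imD C p q) (imDb C p q))) ?leq_addr;
  [done|apply: addS; [exact: iD_S|exact: iDb_S]|apply: addS; [exact: kD_S|exact: iDb_S]|exact: kDDb_S
   |by move=> x [y [z [Hy [Hz ->]]]]; exists y, z; split; [exact: iD_kD|]
   |by move=> x [y [z [Hy [Hz ->]]]]; apply: subD; [exact: kDDb_S|exact: kD_kDDb|apply: kDb_kDDb; exact: iDb_kDb]|exact: F4].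
Qed.
Lemma kDb_top p x : kerDb C p n x.
Proof. rewrite /kerDb; apply: form_bounded; right; exact: ltnSn. Qed.
Lemma kD_top q x : kerD C n q x.
Proof. rewrite /kerD; apply: form_bounded; left; exact: ltnSn. Qed.
Lemma iDDb_0 p q : imDDb C p q 0.
Proof. exact: sub0 (iDDb_S p q). Qed.

Lemma l56 p q :
  [/\ dim_bt C 0 q = 0%N, dim_b C 0 q = 0%N, dim_d C p 0 = 0%N & dim_dt C p 0 = 0%N] /\
  [/\ dim_ct C p n = 0%N, dim_c C p n = 0%N, dim_et C n q = 0%N & dim_e C n q = 0%N].
Proof.
split; split.
- apply: qdim_zero; [apply: capS; [exact: iD_S|exact: iDb_S]
   |by move=> x [H1 H2]; split => //; exact: iDb_kDb
   |move=> x [/= -> _]; exact: sub0 (capS (iD_S 0 q) (iDb_S 0 q))].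
- apply: qdim_zero; [exact: iDDb_S
   |by move=> x /iDDb_capb [H1 H2]; split => //; exact: iDb_kDb
   |by move=> x [/= -> _]].
- apply: qdim_zero; [exact: iDDb_S
   |by move=> x /iDDb_capb [H1 H2]; split => //; exact: iD_kD
   |move=> x [_ /= ->]; exact: iDDb_0].
- apply: qdim_zero; [apply: capS; [exact: iD_S|exact: iDb_S]
   |by move=> x [H1 H2]; split => //; exact: iD_kD
   |move=> x [_ /= ->]; exact: sub0 (capS (iD_S p 0) (iDb_S p 0))].
- apply: qdim_zero; [apply: addS; [exact: iD_S|exact: kDb_S]
   |by move=> x [y [z [Hy [Hz ->]]]]; exists y, z; split; [exact: iD_kD|]
   |move=> x _; apply: addR; [exact: iD_S|exact: kDb_top]].
- apply: qdim_zero; [apply: addS; [exact: iD_S|exact: kDb_S]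
   |by move=> x [y [z [Hy [Hz ->]]]]; apply: subD; [exact: kDDb_S|apply: kD_kDDb; exact: iD_kD|exact: kDb_kDDb]
   |move=> x _; apply: addR; [exact: iD_S|exact: kDb_top]].
- apply: qdim_zero; [apply: addS; [exact: kD_S|exact: iDb_S]
   |by move=> x [y [z [Hy [Hz ->]]]]; exists y, z; split; [|split; [exact: iDb_kDb|]]
   |move=> x _; apply: addL; [exact: iDb_S|exact: kD_top]].
- apply: qdim_zero; [apply: addS; [exact: kD_S|exact: iDb_S]
   |by move=> x [y [z [Hy [Hz ->]]]]; apply: subD; [exact: kDDb_S|exact: kD_kDDb|apply: kDb_kDDb; exact: iDb_kDb]
   |move=> x _; apply: addL; [exact: iDb_S|exact: kD_top]].
Qed.
End Cx.

Local Close Scope ring_scope.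
Unset Implicit Arguments.

Theorem lemma2p4 (R : fieldType) (n : nat) (C : dcomplex R n) :
  all_finite C ->
  forall p q : nat, p <= n -> q <= n ->
  (* (1) *)
  [/\ dim_b C p q = dim_bt C p q + dim_a C p q,
      dim_d C p q = dim_dt C p q + dim_a C p q,
      dim_c C p q = dim_ct C p q + dim_f C p q &
      dim_e C p q = dim_et C p q + dim_f C p q] /\
  (* (2) *)
  [/\ dim_b C p q <= h_BC C p q, dim_d C p q <= h_BC C p q,
      dim_c C p q <= h_A C p q & dim_e C p q <= h_A C p q] /\
  (* (3) *)
  [/\ h_A C p q + dim_bt C p q = h_dbar C p q + dim_c C p q,
      h_A C p q + dim_dt C p q = h_del C p q + dim_e C p q,
      h_BC C p q + dim_et C p q = h_dbar C p q + dim_d C p q &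
      h_BC C p q + dim_ct C p q = h_del C p q + dim_b C p q] /\
  (* (4) *)
  h_A C p q + h_BC C p q
    = h_del C p q + h_dbar C p q + dim_a C p q + dim_f C p q /\
  (* (5) *)
  [/\ h_dbar C 0 q <= h_A C 0 q, h_BC C 0 q <= h_del C 0 q,
      h_BC C p 0 <= h_dbar C p 0 & h_del C p 0 <= h_A C p 0] /\
  (* (6) *)
  [/\ h_del C p n <= h_BC C p n, h_A C p n <= h_dbar C p n,
      h_dbar C n q <= h_BC C n q & h_A C n q <= h_del C n q].
Proof.
move=> Hf p q _ _.
have [e1 e2 e3 e4] := l1 Hf p q.
have [i1 i2 i3 i4] := l2 Hf p q.
have a1 := l3a Hf p q; have a2 := l3b Hf p q; have a3 := l3c Hf p q; have a4 := l3d Hf p q.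
have [[z1 z2 z3 z4] [z5 z6 z7 z8]] := l56 C p q.
have b1 := l3a Hf 0 q; have b2 := l3d Hf 0 q; have b3 := l3c Hf p 0; have b4 := l3b Hf p 0.
have c1 := l3d Hf p n; have c2 := l3a Hf p n; have c3 := l3c Hf n q; have c4 := l3b Hf n q.
split; first by split.
split; first by split.
split; first by split.
split; first lia.
split; split; lia.
Qed.
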